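(* Let $m,n\ge1$, $0\le r\le m$, $A=(A_0,\dots,A_n)\in\mathbb{S}_m(\mathbb{Q})^{n+1}$ and $c\in\mathbb{Q}^n$. Suppose that $\mathcal{F}_r(A,c)\neq\emptyset$, and let $p\in\mathcal{R}_r(A,c)$. Then every $x^*\in\mathcal{F}_r(A,c)$ with $\operatorname{rank}A(x^* )=p$ is a local minimizer of $\ell_c(x)=c^Tx$ on $\mathcal{D}_p\cap\mathbb{R}^n$.
   Context: $\mathbb{S}_m(\mathbb{Q})$ denotes the symmetric $m\times m$ rational matrices; $A(x)=A_0+x_1A_1+\cdots+x_nA_n$. The spectrahedron is $\mathscr{S}=\{x\in\mathbb{R}^n: A(x)\succeq0\}$ (positive semidefinite), and $\mathcal{D}_p=\{x\in\mathbb{C}^n:\operatorname{rank}A(x)\le p\}$. $\mathcal{F}_r(A,c)$ is the set of minimizers of $\ell_c$ on $\mathscr{S}\cap\mathcal{D}_r$ (i.e. points $x^*$ of this set with $\ell_c(x^* )\le\ell_c(x)$ for all $x$ in it), and $\mathcal{R}_r(A,c)=\{p: 0\le p\le r,\ \exists x\in\mathcal{F}_r(A,c),\ \operatorname{rank}A(x)=p\}$. A point $x^*\in S\subset\mathbb{R}^n$ is a local minimizer of $\ell_c$ on $S$ if there is a Euclidean open set $U\ni x^*$ with $\ell_c(x^* )\le\ell_c(x)$ for all $x\in U\cap S$. *)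

(* Defs.v *)
From HB Require Import structures.
From mathcomp Require Import all_boot all_order all_algebra.
From mathcomp Require Import reals.
Set Implicit Arguments. Unset Strict Implicit. Unset Printing Implicit Defensive.
Import Order.TTheory GRing.Theory Num.Theory.
Local Open Scope ring_scope.

Definition sym_rat (m : nat) (M : 'M[rat]_m) : Prop := M^T = M.

(* Affine pencil A(x) = A_0 + x_1 A_1 + ... + x_n A_n, evaluated at a real x,
   with A : 'I_n.+1 -> 'M[rat]_m (A ord0 = A_0, A (lift ord0 i) = A_{i+1}). *)
Definition pencil (R : realType) (m n : nat) (A : 'I_n.+1 -> 'M[rat]_m)
  (x : 'rV[R]_n) : 'M[R]_m :=
  map_mx ratr (A ord0) + \sum_(i < n) x 0 i *: map_mx ratr (A (lift ord0 i)).

Definition psd (R : realType) (m : nat) (M : 'M[R]_m) : Prop :=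
  forall v : 'cV[R]_m, 0 <= (v^T *m M *m v) 0 0.

Definition lin_obj (R : realType) (n : nat) (c : 'rV[rat]_n) (x : 'rV[R]_n) : R :=
  \sum_(i < n) ratr (c 0 i) * x 0 i.

Definition feas_r (R : realType) (m n : nat) (A : 'I_n.+1 -> 'M[rat]_m)
  (r : nat) (x : 'rV[R]_n) : Prop :=
  psd (pencil A x) /\ (\rank (pencil A x) <= r)%N.

Definition F_r (R : realType) (m n : nat) (A : 'I_n.+1 -> 'M[rat]_m)
  (c : 'rV[rat]_n) (r : nat) (x : 'rV[R]_n) : Prop :=
  feas_r A r x /\ forall y : 'rV[R]_n, feas_r A r y -> lin_obj c x <= lin_obj c y.

Definition R_r (R : realType) (m n : nat) (A : 'I_n.+1 -> 'M[rat]_m)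
  (c : 'rV[rat]_n) (r p : nat) : Prop :=
  (p <= r)%N /\ exists x : 'rV[R]_n, F_r A c r x /\ \rank (pencil A x) = p.

(* Local minimizer of l_c on a set S ⊆ R^n: some Euclidean open set U containing xs
   with l_c(xs) <= l_c(x) on U ∩ S; equivalently an open box around xs. *)
Definition local_min (R : realType) (n : nat) (c : 'rV[rat]_n)
  (S : 'rV[R]_n -> Prop) (xs : 'rV[R]_n) : Prop :=
  S xs /\ exists2 e : R, 0 < e &
    forall x : 'rV[R]_n, (forall i, `|x 0 i - xs 0 i| < e) -> S x ->
      lin_obj c xs <= lin_obj c x.

(* Main.v *)
Require Import Defs.
From HB Require Import structures.
From mathcomp Require Import all_boot all_order all_algebra.
From mathcomp Require Import reals.
From mathcomp Require Import ring lra.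
Set Implicit Arguments. Unset Strict Implicit. Unset Printing Implicit Defensive.
Import Order.TTheory GRing.Theory Num.Theory.
Local Open Scope ring_scope.

Definition bf (R : realType) m (B : 'M[R]_m) (x y : 'rV[R]_m) : R := (x *m B *m y^T) 0 0.
Definition nrm2 (R : realType) m (x : 'rV[R]_m) : R := bf 1%:M x x.
Definition S1 (R : realType) m (B : 'M[R]_m) : R := \sum_i \sum_j `|B i j|.

Lemma bfE (R : realType) m (B : 'M[R]_m) x y :
  bf B x y = \sum_j \sum_i x 0 i * B i j * y 0 j.
Proof.
rewrite /bf mxE; apply: eq_bigr => j _; rewrite mxE mulr_suml.
by apply: eq_bigr => i _; rewrite mxE.
Qed.

Lemma nrm2E (R : realType) m (x : 'rV[R]_m) : nrm2 x = \sum_i x 0 i ^+ 2.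
Proof.
rewrite /nrm2 /bf mulmx1 mxE; apply: eq_bigr => i _; by rewrite mxE expr2.
Qed.

Lemma nrm2_ge0 (R : realType) m (x : 'rV[R]_m) : 0 <= nrm2 x.
Proof. rewrite nrm2E; apply: sumr_ge0 => i _; exact: sqr_ge0. Qed.

Lemma sq_le_nrm2 (R : realType) m (x : 'rV[R]_m) i : x 0 i ^+ 2 <= nrm2 x.
Proof.
rewrite nrm2E (bigD1 i) //= lerDl; apply: sumr_ge0 => k _; exact: sqr_ge0.
Qed.

Lemma nrm2_eq0 (R : realType) m (x : 'rV[R]_m) : nrm2 x = 0 -> x = 0.
Proof.
rewrite nrm2E => /eqP; rewrite psumr_eq0; last by move=> i _; exact: sqr_ge0.
move=> /allP H; apply/rowP => i; rewrite mxE.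
have := H i (mem_index_enum i); rewrite /= sqrf_eq0 => /eqP ->.
by [].
Qed.

Lemma S1_ge0 (R : realType) m (B : 'M[R]_m) : 0 <= S1 B.
Proof. apply: sumr_ge0 => i _; apply: sumr_ge0 => j _; exact: normr_ge0. Qed.

Lemma bf_bound (R : realType) m (B : 'M[R]_m) x y :
  `|bf B x y| <= S1 B * (nrm2 x + nrm2 y).
Proof.
rewrite bfE /S1 exchange_big /= mulr_suml.
apply: (le_trans (ler_norm_sum _ _ _)); apply: ler_sum => j _.
rewrite mulr_suml.
apply: (le_trans (ler_norm_sum _ _ _)); apply: ler_sum => i _.
rewrite !normrM mulrAC mulrC.
apply: ler_wpM2l; first exact: normr_ge0.
have h1 := sq_le_nrm2 x j; have h2 := sq_le_nrm2 y i.
have e1 : `|x 0 j| ^+ 2 = x 0 j ^+ 2 by rewrite real_normK // num_real.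
have e2 : `|y 0 i| ^+ 2 = y 0 i ^+ 2 by rewrite real_normK // num_real.
have g1 := normr_ge0 (x 0 j); have g2 := normr_ge0 (y 0 i).
rewrite -e1 in h1; rewrite -e2 in h2.
nra.
Qed.

Lemma bfDl (R : realType) m (B : 'M[R]_m) x1 x2 y :
  bf B (x1 + x2) y = bf B x1 y + bf B x2 y.
Proof. by rewrite /bf !mulmxDl mxE. Qed.
Lemma bfZl (R : realType) m (B : 'M[R]_m) a x y :
  bf B (a *: x) y = a * bf B x y.
Proof. by rewrite /bf -!scalemxAl mxE. Qed.
Lemma bfDr (R : realType) m (B : 'M[R]_m) x y1 y2 :
  bf B x (y1 + y2) = bf B x y1 + bf B x y2.
Proof. by rewrite /bf linearD /= mulmxDr mxE. Qed.
Lemma bfZr (R : realType) m (B : 'M[R]_m) a x y :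
  bf B x (a *: y) = a * bf B x y.
Proof. by rewrite /bf linearZ /= -scalemxAr mxE. Qed.

Lemma bf_sym (R : realType) m (B : 'M[R]_m) x y :
  B^T = B -> bf B x y = bf B y x.
Proof.
move=> HB; rewrite /bf.
transitivity ((x *m B *m y^T)^T 0 0); first by rewrite [RHS]mxE.
by rewrite !trmx_mul trmxK HB mulmxA.
Qed.

Lemma psdE (R : realType) m (M : 'M[R]_m) : psd M <-> forall u, 0 <= bf M u u.
Proof.
split=> [H u|H v]; first by have := H u^T; rewrite trmxK.
by have := H v^T; rewrite /bf trmxK.
Qed.

Lemma bf_expand (R : realType) m (M : 'M[R]_m) x z a :
  bf M (x + a *: z) (x + a *: z) =
  bf M x x + a * (bf M z x + bf M x z) + a ^+ 2 * bf M z z.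
Proof. rewrite !bfDl !bfDr !bfZl !bfZr; ring. Qed.

Lemma cs_bound (R : realType) m (M : 'M[R]_m) u :
  M^T = M -> psd M -> nrm2 (u *m M) <= (2 * S1 M + 1) * bf M u u.
Proof.
move=> HM /psdE Hp.
set z := u *m M; set C := 2 * S1 M + 1.
have S0 := S1_ge0 M.
have Cp : 0 < C by rewrite /C; lra.
set t := C^-1.
have tC : t * C = 1 by rewrite /t mulVf // gt_eqF.
have tp : 0 < t by rewrite /t invr_gt0.
have H := Hp (u + (- t) *: z).
rewrite bf_expand (bf_sym _ _ HM) in H.
have Ez : bf M u z = nrm2 z by rewrite /nrm2 /bf mulmx1.
rewrite Ez in H.
have n0 := nrm2_ge0 z.
have q : bf M z z <= S1 M * (nrm2 z + nrm2 z).
  exact: le_trans (ler_norm _) (bf_bound _ _ _).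
set A := bf M u u in H *; set n := nrm2 z in H q n0 *; set Q := bf M z z in H q *.
have H2 : 0 <= C * (A - 2 * t * n + t ^+ 2 * Q).
  apply: mulr_ge0; first lra. move: H; rewrite sqrrN; lra.
have H3 : C * (A - 2 * t * n + t ^+ 2 * Q) = C * A - 2 * n + t * Q.
  have -> : C * (A - 2 * t * n + t ^+ 2 * Q) = C * A - 2 * (t * C) * n + t * (t * C) * Q by ring.
  by rewrite tC; ring.
rewrite H3 in H2.
have : t * Q <= t * (S1 M * (n + n)) by apply: ler_wpM2l; [lra|].
have -> : t * (S1 M * (n + n)) = t * (C - 1) * n by rewrite /C; ring.
have -> : t * (C - 1) * n = n - t * n by rewrite mulrBr tC; ring.
have : 0 <= t * n by apply: mulr_ge0; lra.
lra.
Qed.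

Lemma cap0 (R : realType) m (X B : 'M[R]_m) :
  (forall w : 'rV_m, (w <= X)%MS -> w *m B = 0 -> w = 0) ->
  \rank (X :&: kermx B)%MS = 0%N.
Proof.
move=> H; apply/eqP; rewrite mxrank_eq0; apply/eqP/row_matrixP => i.
rewrite row0; apply: H; first exact: submx_trans (row_sub i _) (capmxSl _ _).
apply/sub_kermxP; exact: submx_trans (row_sub i _) (capmxSr _ _).
Qed.

Lemma MsubMM (R : realType) m (M : 'M[R]_m) : M^T = M -> (M <= M *m M)%MS.
Proof.
move=> HM; have := mxrank_mul_ker M M.
rewrite cap0 ?addn0 => [E|w].
  by case: (mxrank_leqif_sup (submxMl M M)) => _ <-; rewrite E.
move=> /submxP [a ->] Hw; apply: nrm2_eq0.
have e : M *m (a *m M)^T = ((a *m M) *m M)^T by rewrite [RHS]trmx_mul HM.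
by rewrite /nrm2 /bf mulmx1 -mulmxA e Hw trmx0 mulmx0 mxE.
Qed.

Lemma bf_split (R : realType) m (N M : 'M[R]_m) u :
  bf N u u = bf M u u + bf (N - M) u u.
Proof.
have sub : forall A B : 'M[R]_(1,1), (A - B) 0 0 = A 0 0 - B 0 0 by move=> A B; rewrite !mxE.
rewrite /bf mulmxBr mulmxBl sub; ring. Qed.

Lemma bf_kl (R : realType) m (N : 'M[R]_m) k y : k *m N = 0 -> bf N k y = 0.
Proof. by move=> HK; rewrite /bf HK mul0mx mxE. Qed.

Lemma psd_of_pos (R : realType) m (N V : 'M[R]_m) :
  N^T = N -> (forall u : 'rV_m, (u <= V)%MS -> u != 0 -> 0 < bf N u u) ->
  (\rank N <= \rank V)%N -> psd N.
Proof.
move=> HN Hpos Hr; apply/psdE => v.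
have c0 : \rank (V :&: kermx N)%MS = 0%N.
  apply: cap0 => w Hw HwN; apply/eqP; apply/negP => /negP wn.
  by have := Hpos w Hw wn; rewrite /bf HwN mul0mx mxE ltxx.
have hs := mxrank_sum_cap V (kermx N).
rewrite c0 addn0 mxrank_ker in hs.
have hN := rank_leq_col N.
have hS := rank_leq_col (V + kermx N)%MS.
have full : row_full (V + kermx N)%MS.
  rewrite /row_full; apply/eqP; apply/anti_leq; rewrite hS /= hs.
  by rewrite -(leq_add2r (\rank N)) -addnA subnK // addnC leq_add.
have /sub_addsmxP [[a1 a2] /= ->] := submx_full v full.
set u := a1 *m V; set k := a2 *m kermx N.
have kN : k *m N = 0 by rewrite /k -mulmxA mulmx_ker mulmx0.
rewrite bfDl !bfDr (bf_kl _ kN) (bf_kl _ kN) (bf_sym _ _ HN) (bf_kl _ kN) !addr0.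
case: (eqVneq u 0) => [->|un]; first by rewrite /bf !mul0mx mxE.
by apply: ltW; apply: Hpos => //; exact: submxMl.
Qed.

Lemma EG_gen (R : realType) m (M P : 'M[R]_m) : M^T = M ->
  M *m P *m (M *m M) = M -> M *m M *m (P^T *m M) = M.
Proof. by move=> HM E; have := congr1 trmx E; rewrite !trmx_mul HM. Qed.

Lemma key (R : realType) m (M : 'M[R]_m) : M^T = M -> psd M ->
  exists2 eps : R, 0 < eps & forall N : 'M[R]_m, N^T = N ->
    (forall i j, `|N i j - M i j| < eps) -> (\rank N <= \rank M)%N -> psd N.
Proof.
move=> HM Hp.
set G := (pinvmx (M *m M))^T *m M.
have EG : M *m M *m G = M.
  exact: EG_gen HM (mulmxKpV (MsubMM HM)).
have EG' : M *m (M *m G) = M by rewrite mulmxA EG.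
set C1 := 2 * S1 M + 1; set C2 := 2 * S1 (G *m G^T) + 1.
have C1p : 0 < C1 by have := S1_ge0 M; rewrite /C1; lra.
have C2p : 0 < C2 by have := S1_ge0 (G *m G^T); rewrite /C2; lra.
set d := (C1 * C2)^-1.
have dp : 0 < d by rewrite /d invr_gt0 mulr_gt0.
have dC : d * (C1 * C2) = 1 by rewrite /d mulVf // gt_eqF // mulr_gt0.
have Hd : forall u, (u <= M)%MS -> d * nrm2 u <= bf M u u.
  move=> u /submxP [a ->].
  set z := a *m M *m M.
  have uz : a *m M = z *m G by rewrite /z -!mulmxA EG'.
  have h1 : nrm2 z <= C1 * bf M (a *m M) (a *m M) by exact: cs_bound.
  have h2 : nrm2 (a *m M) <= C2 * nrm2 z.
    have -> : nrm2 (a *m M) = bf (G *m G^T) z z.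
      by rewrite uz /nrm2 /bf mulmx1 trmx_mul !mulmxA.
    apply: le_trans (le_trans (ler_norm _) (bf_bound _ _ _)) _.
    have := S1_ge0 (G *m G^T); have := nrm2_ge0 z; rewrite /C2; nra.
  have A0 : 0 <= bf M (a *m M) (a *m M) by move/psdE: Hp.
  have h3 : nrm2 (a *m M) <= (C1 * C2) * bf M (a *m M) (a *m M).
    apply: le_trans h2 _; rewrite [C1 * C2]mulrC -mulrA; by rewrite ler_pM2l.
  have := ler_wpM2l (ltW dp) h3; rewrite mulrA dC mul1r; done.
set k : R := (m * m)%:R.
have k0 : 0 <= k by rewrite /k ler0n.
set eps := d / (2 * k + 1).
have kp : 0 < 2 * k + 1 by lra.
have ep : 0 < eps by rewrite /eps divr_gt0.
have e2 : eps * (2 * k + 1) = d by rewrite /eps mulfVK // gt_eqF.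
clearbody eps d.
exists eps => // N HN Hnear Hr.
apply: (psd_of_pos HN _ Hr) => u Hu un.
have n0 : 0 < nrm2 u.
  rewrite lt_def nrm2_ge0 andbT; apply/eqP => /nrm2_eq0 u0; by rewrite u0 eqxx in un.
have SE : S1 (N - M) <= k * eps.
  apply: (@le_trans _ _ (\sum_(i < m) \sum_(j < m) eps)).
    apply: ler_sum => i _; apply: ler_sum => j _.
    have -> : (N - M) i j = N i j - M i j by rewrite !mxE.
    exact: ltW (Hnear i j).
  have -> : \sum_(i < m) \sum_(j < m) eps = (eps *+ m) *+ m.
    by rewrite !sumr_const !card_ord.
  by rewrite -mulrnA -mulr_natl /k.
have hE := bf_bound (N - M) u u.
have hM := Hd u Hu.
rewrite (bf_split N M).
have hE' : - (S1 (N - M) * (nrm2 u + nrm2 u)) <= bf (N - M) u u.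
  by rewrite lerNl; apply: le_trans hE; rewrite -normrN ler_norm.
have S0 := S1_ge0 (N - M).
have : S1 (N - M) * (nrm2 u + nrm2 u) <= k * eps * (nrm2 u + nrm2 u).
  apply: ler_wpM2r; [apply: addr_ge0; exact: nrm2_ge0 | exact: SE].
have : d * nrm2 u = eps * (2 * k + 1) * nrm2 u by rewrite e2.
have : eps * (2 * k + 1) * nrm2 u - k * eps * (nrm2 u + nrm2 u) = eps * nrm2 u by ring.
have : 0 < eps * nrm2 u by apply: mulr_gt0.
move: hM hE'; clear; lra.
Qed.

Lemma entry_le_S1 (R : realType) m (B : 'M[R]_m) j k : `|B j k| <= S1 B.
Proof.
rewrite /S1 (bigD1 j) //= (bigD1 k) //= -addrA lerDl.
apply: addr_ge0; first by apply: sumr_ge0 => i _; exact: normr_ge0.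
by apply: sumr_ge0 => i _; apply: sumr_ge0 => l _; exact: normr_ge0.
Qed.

Lemma pencilE (R : realType) m n (A : 'I_n.+1 -> 'M[rat]_m) (x : 'rV[R]_n) j k :
  pencil A x j k = ratr (A ord0 j k) +
     \sum_(i < n) x 0 i * (map_mx ratr (A (lift ord0 i)) : 'M[R]_m) j k.
Proof.
rewrite /pencil mxE summxE mxE; congr (_ + _).
by apply: eq_bigr => i _; rewrite mxE.
Qed.

Lemma pencil_sym (R : realType) m n (A : 'I_n.+1 -> 'M[rat]_m) (x : 'rV[R]_n) :
  (forall i, sym_rat (A i)) -> (pencil A x)^T = pencil A x.
Proof.
move=> Hs; rewrite /pencil linearD linear_sum /= map_trmx Hs; congr (_ + _).
by apply: eq_bigr => i _; rewrite linearZ /= map_trmx Hs.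
Qed.

Theorem theorem1 (R : realType) (m n r : nat) (A : 'I_n.+1 -> 'M[rat]_m)
  (c : 'rV[rat]_n) (p : nat) :
  (1 <= m)%N -> (1 <= n)%N -> (r <= m)%N ->
  (forall i, sym_rat (A i)) ->
  (exists x : 'rV[R]_n, F_r A c r x) ->
  R_r R A c r p ->
  forall xs : 'rV[R]_n, F_r A c r xs -> \rank (pencil A xs) = p ->
    local_min c (fun x => (\rank (pencil A x) <= p)%N) xs.
Proof.
move=> _ _ _ Hs _ [Hpr _] xs [[Hpsd Hrk] Hmin] Hp.
split; first by rewrite Hp.
have [eps ep Hk] := key (pencil_sym xs Hs) Hpsd.
set B := fun i : 'I_n => (map_mx ratr (A (lift ord0 i)) : 'M[R]_m).
set T := \sum_(i < n) S1 (B i).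
have T0 : 0 <= T by apply: sumr_ge0 => i _; exact: S1_ge0.
have T1 : 0 < T + 1 by lra.
set e := eps / (T + 1).
have e0 : 0 < e by rewrite /e divr_gt0.
have eT : e * (T + 1) = eps by rewrite /e mulfVK // gt_eqF.
exists e => // x Hx Hrx.
apply: Hmin; split; last exact: leq_trans Hrx Hpr.
apply: Hk; first exact: pencil_sym.
  move=> j k; rewrite !pencilE.
  have -> : ratr (A ord0 j k) + \sum_(i < n) x 0 i * B i j k -
     (ratr (A ord0 j k) + \sum_(i < n) xs 0 i * B i j k) =
     \sum_(i < n) (x 0 i - xs 0 i) * B i j k.
    have -> : forall a b c : R, a + b - (a + c) = b - c.
      by move=> a b c'; ring.
    rewrite -sumrB; by apply: eq_bigr => i _; ring.
  apply: (le_lt_trans (ler_norm_sum _ _ _)).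
  apply: (@le_lt_trans _ _ (\sum_(i < n) e * S1 (B i))).
    apply: ler_sum => i _; rewrite normrM.
    apply: ler_pM; [exact: normr_ge0 | exact: normr_ge0 | exact: ltW (Hx i) |].
    exact: entry_le_S1.
  rewrite -mulr_sumr -/T -eT.
  have : 0 < e * 1 by rewrite mulr1.
  rewrite mulrDr; lra.
by rewrite Hp.
Qed.
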